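(* Let $l\ge1$, let $G$ be an $l$-step nilpotent group and let $S$ be a symmetric subset of $G$. Then for every $h\in G$ and every $g$ in the subgroup $\langle S\rangle$ generated by $S$, the commutator $[g,h]$ can be written as a product of iterated commutators $[x_1,\dots,x_i]$ with $i\le l$, where $x_j\in S\cup\{h,h^{-1}\}$ for each $j=1,\dots,i$, and in each such iterated commutator at least one $x_j$ lies in $\{h,h^{-1}\}$.
   Context: For group elements, $[y,z]=yzy^{-1}z^{-1}$, and the iterated commutator is $[x_1,\dots,x_i]=[x_1,[x_2,\dots,[x_{i-1},x_i]\dots]]$ for $i\ge2$. The descending central series is $C^0(G)=G$, $C^{j+1}(G)=[G,C^j(G)]$, and $G$ is $l$-step nilpotent if $C^l(G)=\{1\}$ and $C^{l-1}(G)\ne\{1\}$. *)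

(* Defs.v *)
From Stdlib Require Import List Arith.
Import ListNotations.

(* A group: associative operation with left identity and left inverses
   (these axioms imply the usual two-sided group axioms). *)
Record Group := {
  carrier :> Type;
  gmul : carrier -> carrier -> carrier;
  ginv : carrier -> carrier;
  gone : carrier;
  gmulA : forall x y z, gmul x (gmul y z) = gmul (gmul x y) z;
  gmul1l : forall x, gmul gone x = x;
  gmulVl : forall x, gmul (ginv x) x = gone
}.
Arguments gmul {g}.
Arguments ginv {g}.
Arguments gone {g}.

Section Defs.
Variable G : Group.

Definition comm (y z : G) : G := gmul (gmul (gmul y z) (ginv y)) (ginv z).

(* iterated commutator [x1,...,xi] = [x1,[x2,...,[x_{i-1},x_i]...]];
   only used for lists of length >= 2 *)
Fixpoint icomm (s : list G) : G :=
  match s with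
  | [] => gone
  | x :: s' => match s' with
               | [] => x
               | _ => comm x (icomm s')
               end
  end.

Inductive gen (A : G -> Prop) : G -> Prop :=
| gen_base a : A a -> gen A a
| gen_one : gen A gone
| gen_mul x y : gen A x -> gen A y -> gen A (gmul x y)
| gen_inv x : gen A x -> gen A (ginv x).

Fixpoint lcs (j : nat) : G -> Prop :=
  match j with
  | 0 => fun _ => True
  | S j' => gen (fun z => exists g c, lcs j' c /\ z = comm g c)
  end.

Definition trivial_subset (A : G -> Prop) : Prop := forall x, A x <-> x = gone.

Definition nilpotent_step (l : nat) : Prop :=
  trivial_subset (lcs l) /\ ~ trivial_subset (lcs (l - 1)).

Definition symmetric (S : G -> Prop) : Prop := forall x, S x -> S (ginv x).

End Defs.

Arguments comm {G}.
Arguments icomm {G}.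
Arguments gen {G}.
Arguments lcs {G}.
Arguments nilpotent_step : clear implicits.
Arguments symmetric {G}.

(* Main.v *)
Require Import Defs.
From Stdlib Require Import List Arith Lia.
Import ListNotations.

Section Aux.
Variable G : Group.
Implicit Types x y z a b c h : G.

Lemma gA' x y z : gmul (gmul x y) z = gmul x (gmul y z).
Proof. now rewrite gmulA. Qed.

Lemma gV x : gmul x (ginv x) = gone.
Proof.
  rewrite <- (gmul1l G (gmul x (ginv x))).
  rewrite <- (gmulVl G (ginv x)).
  rewrite <- gmulA, (gmulA _ (ginv x) x), gmulVl, gmul1l, gmulVl. reflexivity.
Qed.

Lemma g1r x : gmul x gone = x.
Proof. rewrite <- (gmulVl G x), gmulA, gV, gmul1l. reflexivity. Qed.

Lemma gKl x y : gmul (ginv x) (gmul x y) = y.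
Proof. now rewrite gmulA, gmulVl, gmul1l. Qed.

Lemma gKr x y : gmul x (gmul (ginv x) y) = y.
Proof. now rewrite gmulA, gV, gmul1l. Qed.

Lemma ginv_uniq x y : gmul x y = gone -> ginv x = y.
Proof.
  intro H. rewrite <- (g1r (ginv x)), <- H, gKl. reflexivity.
Qed.

Lemma ginvM x y : ginv (gmul x y) = gmul (ginv y) (ginv x).
Proof.
  apply ginv_uniq. rewrite gA', gKr, gV. reflexivity.
Qed.

Lemma ginvK x : ginv (ginv x) = x.
Proof. apply ginv_uniq. apply gmulVl. Qed.

Lemma ginv1 : ginv (@gone G) = gone.
Proof. apply ginv_uniq. apply gmul1l. Qed.

Hint Rewrite gA' gmul1l g1r gmulVl gV gKl gKr ginvM ginvK ginv1 : gsimp.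

Lemma comm_mul a b h : comm (gmul a b) h =
  gmul (gmul (gmul a (comm b h)) (ginv a)) (comm a h).
Proof. unfold comm. autorewrite with gsimp. reflexivity. Qed.

Lemma conj_comm a c : gmul (gmul a c) (ginv a) = gmul (comm a c) c.
Proof. unfold comm. autorewrite with gsimp. reflexivity. Qed.

Lemma conj_mul a x y : gmul (gmul a (gmul x y)) (ginv a) =
  gmul (gmul (gmul a x) (ginv a)) (gmul (gmul a y) (ginv a)).
Proof. autorewrite with gsimp. reflexivity. Qed.

Lemma prod_app (u v : list G) :
  fold_right gmul gone (u ++ v) = gmul (fold_right gmul gone u) (fold_right gmul gone v).
Proof.
  induction u; simpl. now rewrite gmul1l. now rewrite IHu, gmulA.
Qed.

Lemma icomm_lcs (w : list G) n : length w = S n -> lcs n (icomm w).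
Proof.
  revert n. induction w as [|x w IH]; intros n Hn; simpl in Hn. discriminate.
  destruct w as [|y w']. simpl. injection Hn as <-. exact I.
  simpl in Hn. injection Hn as Hn. destruct n. discriminate.
  change (icomm (x :: y :: w')) with (comm x (icomm (y :: w'))).
  simpl. apply gen_base. exists x, (icomm (y :: w')). split; [|reflexivity].
  apply IH. simpl. now rewrite Hn.
Qed.

End Aux.

Theorem lemma2p5p2 (G : Group) (l : nat) (S : G -> Prop) :
  1 <= l -> nilpotent_step G l -> symmetric S ->
  forall h g : G, gen S g ->
  exists ws : list (list G),
    comm g h = fold_right gmul gone (map icomm ws) /\
    Forall (fun w =>
      2 <= length w <= l /\
      Forall (fun x => S x \/ x = h \/ x = ginv h) w /\
      Exists (fun x => x = h \/ x = ginv h) w) ws.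
Proof.
  intros Hl [Htriv _] Hsym h g Hg.
  set (good := fun w : list G => 2 <= length w <= l /\
      Forall (fun x => S x \/ x = h \/ x = ginv h) w /\
      Exists (fun x => x = h \/ x = ginv h) w).
  change (exists ws, comm g h = fold_right gmul gone (map icomm ws) /\ Forall good ws).
  assert (Hlist : exists gs, Forall S gs /\ g = fold_right gmul gone gs).
  { induction Hg as [a Ha| |x y _ [u [Hu ->]] _ [v [Hv ->]]|x _ [u [Hu ->]]].
    - exists [a]. split. now constructor. simpl. now rewrite g1r.
    - exists []. split; auto.
    - exists (u ++ v). split. now apply Forall_app. now rewrite prod_app.
    - exists (rev (map ginv u)). split.
      + apply Forall_rev. apply Forall_map. eapply Forall_impl; [|exact Hu]. exact Hsym.
      + clear Hu. induction u as [|a u IH]; simpl. now rewrite ginv1.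
        rewrite prod_app, <- IH, ginvM. simpl. now rewrite g1r. }
  destruct Hlist as [gs [Hgs ->]]. clear Hg.
  assert (Hconj : forall a ws, S a -> Forall good ws -> exists ws',
    gmul (gmul a (fold_right gmul gone (map icomm ws))) (ginv a) =
      fold_right gmul gone (map icomm ws') /\ Forall good ws').
  { intros a ws Ha Hws. induction Hws as [|w ws Hw Hws IH].
    - exists []. simpl. split; [|constructor]. now rewrite g1r, gV.
    - destruct IH as [ws' [E Hws']]. simpl. rewrite conj_mul, E, conj_comm.
      destruct Hw as [Hlen [Hall Hex]].
      assert (Hc : comm a (icomm w) = icomm (a :: w)).
      { destruct w as [|x w]. simpl in Hlen; lia. reflexivity. }
      rewrite Hc.
      destruct (le_lt_dec (length (a :: w)) l) as [Hle|Hgt].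
      + exists ((a :: w) :: w :: ws'). simpl. split. now rewrite gmulA.
        constructor. split. simpl in *; lia. split. constructor; auto. now constructor.
        constructor. split; auto. assumption.
      + assert (E1 : icomm (a :: w) = gone).
        { apply Htriv. apply icomm_lcs. simpl in *. lia. }
        rewrite E1, gmul1l. exists (w :: ws'). split. reflexivity.
        constructor; [split; auto|assumption]. }
  induction Hgs as [|s gs Hs Hgs IH]; simpl.
  - exists []. split; [|constructor]. unfold comm. simpl.
    now rewrite gmul1l, ginv1, g1r, gV.
  - rewrite comm_mul. destruct IH as [ws [E Hws]]. rewrite E.
    destruct (Hconj s ws Hs Hws) as [ws' [E' Hws']]. rewrite E'.
    destruct (le_lt_dec 2 l) as [Hle|Hgt].
    + exists (ws' ++ [[s; h]]). rewrite map_app, prod_app. simpl. rewrite g1r.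
      split. reflexivity. apply Forall_app. split; auto. constructor; [|constructor].
      split. simpl; lia. split. { constructor; [auto|constructor; [auto|constructor]]. } apply Exists_cons_tl. constructor. auto.
    + assert (E1 : comm s h = gone).
      { apply Htriv. replace l with 1 by lia. simpl. apply gen_base. eauto. }
      rewrite E1, g1r. exists ws'. auto.
Qed.
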